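(* Let $k$ be a field of characteristic zero, $\lambda,\mu\in k$, ${\boldsymbol\lambda}=\begin{pmatrix}0&\lambda\\-\lambda&0\end{pmatrix}$ and ${\boldsymbol\mu}=\begin{pmatrix}0&\mu\\-\mu&0\end{pmatrix}$. Then $k_{\boldsymbol\lambda}(x_1,x_2)\cong k_{\boldsymbol\mu}(x_1,x_2)$ as Poisson algebras if and only if $\lambda=\pm\mu$.
   Context: For antisymmetric ${\boldsymbol\lambda}\in M_n(k)$, $k_{\boldsymbol\lambda}(x_1,\dots,x_n)$ is the rational function field $k(x_1,\dots,x_n)$ with the unique Poisson bracket satisfying $\{x_i,x_j\}=\lambda_{ij}x_ix_j$. *)

(* Defs.v *)
From HB Require Import structures.
From mathcomp Require Import all_boot all_order all_algebra.
From mathcomp Require Import mpoly.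
Set Implicit Arguments. Unset Strict Implicit. Unset Printing Implicit Defensive.
Import GRing.Theory.
Local Open Scope ring_scope.

Notation tofrac := (@FracField.tofrac _).
Notation "x %:F" := (tofrac x).

Definition ratfun2 (k : fieldType) := {fraction {mpoly k[2]}}.

Definition rconst (k : fieldType) (c : k) : ratfun2 k := (c%:MP)%:F.

Definition rx1 (k : fieldType) : ratfun2 k := ('X_(@ord0 1) : {mpoly k[2]})%:F.
Definition rx2 (k : fieldType) : ratfun2 k := ('X_(@ord_max 1) : {mpoly k[2]})%:F.

Definition is_poisson_bracket (k : fieldType) (B : ratfun2 k -> ratfun2 k -> ratfun2 k) :=
  [/\ (forall (c : k) f g h, B (rconst c * f + g) h = rconst c * B f h + B g h),
      (forall f g, B f g = - B g f),
      (forall f g h, B f (B g h) + B g (B h f) + B h (B f g) = 0) &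
      (forall f g h, B f (g * h) = B f g * h + g * B f h)].

(* The bracket of k_lambda(x_1,x_2) for lambda = [[0, l], [-l, 0]]:
   the Poisson bracket with {x_1, x_2} = l x_1 x_2 (unique by the paper). *)
Definition is_qbracket (k : fieldType) (l : k) (B : ratfun2 k -> ratfun2 k -> ratfun2 k) :=
  is_poisson_bracket B /\ B (rx1 k) (rx2 k) = rconst l * rx1 k * rx2 k.

Definition poisson_iso (k : fieldType) (B1 B2 : ratfun2 k -> ratfun2 k -> ratfun2 k)
    (phi : ratfun2 k -> ratfun2 k) :=
  [/\ bijective phi,
      (forall f g, phi (f + g) = phi f + phi g),
      (forall f g, phi (f * g) = phi f * phi g),
      (forall c : k, phi (rconst c) = rconst c) &
      (forall f g, phi (B1 f g) = B2 (phi f) (phi g))].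

(* Main.v *)
Require Import Defs.
From HB Require Import structures.
From mathcomp Require Import all_boot all_order all_algebra.
From mathcomp Require Import mpoly.
From mathcomp Require Import ring.
From mathcomp Require Import fingroup perm.
Import Order.TTheory GRing.Theory.
Local Open Scope ring_scope.
Local Open Scope quotient_scope.
Set Implicit Arguments. Unset Strict Implicit. Unset Printing Implicit Defensive.

Section Frac.
Variable R : idomainType.
Local Notation tofrac := (@FracField.tofrac R).
Local Notation "x %:F" := (tofrac x).
Lemma frac_repr (x : {fraction R}) : exists p q, q != 0 /\ x = p%:F / q%:F.
Proof.
elim/quotW: x => r.
exists (r.1), (r.2); split; first exact: denom_ratioP.
apply: (@mulIf _ (r.2)%:F); first by rewrite tofrac_eq0 denom_ratioP.
rewrite mulfVK ?tofrac_eq0 ?denom_ratioP //.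
unlock FracField.tofrac.
rewrite -[_ * _]FracField.pi_mul.
apply/eqmodP; rewrite /= FracField.equivfE /FracField.mulf.
rewrite !numden_Ratio ?mulr1 ?oner_neq0 ?mul1r ?denom_ratioP //=.
by rewrite mulrC.
Qed.
Lemma pi_ratio (r : {ratio R}) :
  \pi_({fraction R}) r = (\n_r)%:F / (\d_r)%:F.
Proof.
apply: (@mulIf _ (\d_r)%:F); first by rewrite tofrac_eq0 denom_ratioP.
rewrite mulfVK ?tofrac_eq0 ?denom_ratioP //.
unlock FracField.tofrac.
rewrite -[_ * _]FracField.pi_mul.
apply/eqmodP; rewrite /= FracField.equivfE /FracField.mulf.
rewrite !numden_Ratio ?mulr1 ?oner_neq0 ?mul1r ?denom_ratioP //=.
by rewrite mulrC.
Qed.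

Lemma repr_frac (x : {fraction R}) : x = (\n_(generic_quotient.repr x))%:F / (\d_(generic_quotient.repr x))%:F.
Proof. by rewrite -pi_ratio reprK. Qed.
End Frac.

Section Main.
Variable k : fieldType.
Local Notation K := (ratfun2 k).
Local Notation A := {mpoly k[2]}.

Lemma rconstD (a b : k) : rconst (a + b) = rconst a + rconst b.
Proof. by rewrite /rconst mpolyCD tofracD. Qed.
Lemma rconstM (a b : k) : rconst (a * b) = rconst a * rconst b.
Proof. by rewrite /rconst mpolyCM tofracM. Qed.
Lemma rconstN (a : k) : rconst (- a) = - rconst a.
Proof. by rewrite /rconst mpolyCN tofracN. Qed.
Lemma rconst1 : rconst 1 = 1 :> K.
Proof. by rewrite /rconst mpolyC1 tofrac1. Qed.
Lemma rconst0 : rconst 0 = 0 :> K.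
Proof. by rewrite /rconst mpolyC0 tofrac0. Qed.
Lemma rconst_nat (n : nat) : rconst n%:R = n%:R :> K.
Proof. by rewrite /rconst mpolyC_nat rmorph_nat. Qed.
Lemma rconst_eq0 (a : k) : (rconst a == 0) = (a == 0).
Proof. by rewrite /rconst tofrac_eq0 mpolyC_eq0. Qed.
Lemma rconst_inj : injective (@rconst k).
Proof. by move=> a b e; apply/eqP; rewrite -subr_eq0 -rconst_eq0 rconstD rconstN e subrr. Qed.

Definition is_der (D : K -> K) :=
  [/\ forall f g, D (f + g) = D f + D g,
      forall f g, D (f * g) = D f * g + f * D g &
      forall c, D (rconst c) = 0].

Lemma der0 D : is_der D -> D 0 = 0.
Proof. by case=> hD _ _; apply: (addrI (D 0)); rewrite addr0 -hD addr0. Qed.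
Lemma derN D : is_der D -> forall f, D (- f) = - D f.
Proof. move=> h f; apply/eqP; rewrite -subr_eq0 opprK; case: (h) => hD _ _.
by rewrite -hD addNr der0. Qed.
Lemma derB D : is_der D -> forall f g, D (f - g) = D f - D g.
Proof. by move=> h f g; case: (h) => hD _ _; rewrite hD derN. Qed.

Lemma der_poly0 D : is_der D -> D (rx1 k) = 0 -> D (rx2 k) = 0 ->
  forall p : A, D p%:F = 0.
Proof.
move=> hd h1 h2; have [hD hM hC] := hd.
have hMz f g : D f = 0 -> D g = 0 -> D (f * g) = 0.
  by move=> hf hg; rewrite hM hf hg mulr0 mul0r addr0.
have hX f n : D f = 0 -> D (f ^+ n) = 0.
  move=> hf; elim: n => [|n ih]; first by rewrite expr0 -rconst1 hC.
  by rewrite exprS hMz.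
elim/mpolyind => [|c m p _ _ ih]; first by rewrite tofrac0 der0.
rewrite tofracD hD ih addr0 -mul_mpolyC tofracM hMz //; first exact: hC.
rewrite (mpolyXE_id _ m) big_ord_recl big_ord1 tofracM.
have -> : lift ord0 ord0 = ord_max :> 'I_2 by apply: val_inj.
by apply: hMz; rewrite tofracXn hX.
Qed.

Lemma der_zero D : is_der D -> D (rx1 k) = 0 -> D (rx2 k) = 0 ->
  forall f, D f = 0.
Proof.
move=> hd h1 h2 f; have [hD hM hC] := hd.
have [p [q [q0 ->]]] := @frac_repr _ f.
have q0' : q%:F != 0 :> K by rewrite tofrac_eq0.
have e : D p%:F = D (p%:F / q%:F) * q%:F + (p%:F / q%:F) * D q%:F.
  by rewrite -hM divfK.
move: e; rewrite (der_poly0 hd h1 h2 p) (der_poly0 hd h1 h2 q) mulr0 addr0.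
by move/esym/eqP; rewrite mulf_eq0 (negbTE q0') orbF => /eqP.
Qed.

Lemma der_sub D1 D2 : is_der D1 -> is_der D2 -> is_der (fun f => D1 f - D2 f).
Proof.
case=> a1 m1 c1 [a2 m2 c2]; split.
- by move=> f g; rewrite a1 a2 opprD addrACA.
- by move=> f g; rewrite m1 m2 mulrBl mulrBr opprD !addrA; congr (_ + _);
    rewrite -!addrA; congr (_ + _); rewrite addrC.
- by move=> c; rewrite c1 c2 subrr.
Qed.

Lemma der_scale a D : is_der D -> is_der (fun f => a * D f).
Proof.
case=> a1 m1 c1; split.
- by move=> f g; rewrite a1 mulrDr.
- by move=> f g; rewrite m1 mulrDr mulrA mulrCA.
- by move=> c; rewrite c1 mulr0.
Qed.

Definition is_bider (B : K -> K -> K) :=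
  [/\ (forall (c : k) f g h, B (rconst c * f + g) h = rconst c * B f h + B g h),
      (forall f g, B f g = - B g f) &
      (forall f g h, B f (g * h) = B f g * h + g * B f h)].

Lemma poisson_bider B : is_poisson_bracket B -> is_bider B.
Proof. by case=> *; split. Qed.

Section Bider.
Variable B : K -> K -> K.
Hypothesis hB : is_bider B.

Lemma bl_add f g h : B (f + g) h = B f h + B g h.
Proof. by have [hl _ _] := hB; have := hl 1 f g h; rewrite rconst1 !mul1r. Qed.

Lemma br0 h : B h 0 = 0.
Proof. by have [_ _ hL] := hB; have := hL h 0 0; rewrite !mul0r mulr0 addr0. Qed.
Lemma br1 h : B h 1 = 0.
Proof.
have [_ _ hL] := hB; have := hL h 1 1; rewrite !mulr1 mul1r.
by move=> e; apply: (addrI (B h 1)); rewrite addr0 -e.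
Qed.

Lemma bl_const c h : B (rconst c) h = 0.
Proof.
have [hl ha _] := hB; have := hl c 1 0 h.
by rewrite mulr1 addr0 => ->; rewrite ha br1 ha br0 oppr0 mulr0 addr0.
Qed.

Lemma der_r h : is_der (B h).
Proof.
have [hl ha hL] := hB; split => //.
- by move=> f g; rewrite ha bl_add opprD -!ha.
- by move=> c; rewrite ha bl_const oppr0.
Qed.

Lemma der_l h : is_der (fun f => B f h).
Proof.
have [hl ha hL] := hB; split.
- by move=> f g; rewrite bl_add.
- by move=> f g; rewrite ha hL opprD (ha h f) (ha h g) mulrN mulNr !opprK.
- by move=> c; rewrite bl_const.
Qed.

Lemma b_alt (h2 : (2%:R : k) != 0) f : B f f = 0.
Proof.
have [_ ha _] := hB; have e := ha f f.
have : B f f * 2%:R = 0 by rewrite mulr_natr mulr2n {1}e addNr.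
move/eqP; rewrite mulf_eq0 -rconst_nat rconst_eq0 (negbTE h2) orbF.
by move/eqP.
Qed.
End Bider.

Lemma bider_unique B1 B2 : (2%:R : k) != 0 -> is_bider B1 -> is_bider B2 ->
  B1 (rx1 k) (rx2 k) = B2 (rx1 k) (rx2 k) -> forall f g, B1 f g = B2 f g.
Proof.
move=> h2 hB1 hB2 e.
have [_ a1 _] := hB1; have [_ a2 _] := hB2.
have hx : forall f, B1 (rx1 k) f = B2 (rx1 k) f /\ B1 (rx2 k) f = B2 (rx2 k) f.
  move=> f; split; apply/eqP; rewrite -subr_eq0; apply/eqP.
  - apply: (der_zero (der_sub (der_r hB1 _) (der_r hB2 _)) _ _ f).
      by rewrite !b_alt // subrr.
    by rewrite e subrr.
  - apply: (der_zero (der_sub (der_r hB1 _) (der_r hB2 _)) _ _ f).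
      by rewrite a1 a2 e subrr.
    by rewrite !b_alt // subrr.
move=> f g; apply/eqP; rewrite -subr_eq0; apply/eqP.
apply: (der_zero (der_sub (der_l hB1 g) (der_l hB2 g)) _ _ f) => /=.
  by have [-> _] := hx g; rewrite subrr.
by have [_ ->] := hx g; rewrite subrr.
Qed.

Lemma frac_eq (p q p' q' : A) : q != 0 -> q' != 0 ->
  (p%:F / q%:F == p'%:F / q'%:F :> K) = (p * q' == p' * q).
Proof.
move=> q0 q'0.
by rewrite eqr_div ?tofrac_eq0 // -!tofracM tofrac_eq.
Qed.

Section Lift.
Variable sg : {rmorphism A -> A}.
Hypothesis sg_inj : injective sg.

Definition liftf (x : K) : K :=
  (sg (\n_(generic_quotient.repr x)))%:F / (sg (\d_(generic_quotient.repr x)))%:F.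

Lemma sg_neq0 q : q != 0 -> sg q != 0.
Proof. by apply: contra => /eqP e; apply/eqP; apply: sg_inj; rewrite e rmorph0. Qed.

Lemma liftfE p q : q != 0 -> liftf (p%:F / q%:F) = (sg p)%:F / (sg q)%:F.
Proof.
move=> q0; rewrite /liftf.
set x := p%:F / q%:F.
have dn : \d_(generic_quotient.repr x) != 0 by exact: denom_ratioP.
have ex : x = (\n_(generic_quotient.repr x))%:F / (\d_(generic_quotient.repr x))%:F by exact: repr_frac.
apply/eqP; rewrite frac_eq ?sg_neq0 // -!rmorphM; apply/eqP; congr (sg _).
by apply/eqP; rewrite -frac_eq // -ex.
Qed.

Lemma liftf_add f g : liftf (f + g) = liftf f + liftf g.
Proof.
have [p [q [q0 ->]]] := @frac_repr _ f.
have [p' [q' [q'0 ->]]] := @frac_repr _ g.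
have qq0 : q * q' != 0 by rewrite mulf_neq0.
have -> : p%:F / q%:F + p'%:F / q'%:F = (p * q' + p' * q)%:F / (q * q')%:F :> K.
  by rewrite tofracD !tofracM addf_div ?tofrac_eq0.
by rewrite !liftfE // rmorphD !rmorphM tofracD !tofracM addf_div ?tofrac_eq0 ?sg_neq0.
Qed.

Lemma liftf_mul f g : liftf (f * g) = liftf f * liftf g.
Proof.
have [p [q [q0 ->]]] := @frac_repr _ f.
have [p' [q' [q'0 ->]]] := @frac_repr _ g.
have qq0 : q * q' != 0 by rewrite mulf_neq0.
have -> : p%:F / q%:F * (p'%:F / q'%:F) = (p * p')%:F / (q * q')%:F :> K.
  by rewrite !tofracM invfM mulrACA.
by rewrite !liftfE // !rmorphM invfM mulrACA.
Qed.

Lemma liftf_poly p : liftf p%:F = (sg p)%:F.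
Proof.
by have := liftfE p (oner_neq0 A); rewrite tofrac1 rmorph1 tofrac1 !divr1.
Qed.

Lemma liftf_inv (hK : forall p, sg (sg p) = p) f : liftf (liftf f) = f.
Proof.
have [p [q [q0 ->]]] := @frac_repr _ f.
by rewrite !liftfE ?sg_neq0 // !hK.
Qed.

Lemma liftf_opp f : liftf (- f) = - liftf f.
Proof. by apply: (addrI (liftf f)); rewrite -liftf_add !subrr -tofrac0 liftf_poly rmorph0 tofrac0. Qed.
End Lift.

Definition swp : 'S_2 := tperm ord0 ord_max.
Definition sgs : {rmorphism A -> A} := msym swp.

Lemma sgs_inj : injective sgs.
Proof. exact: inj_msym. Qed.
Lemma sgsK p : sgs (sgs p) = p.
Proof. by rewrite /sgs /= -msymMm tperm2 msym1m. Qed.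
Lemma sgsC c : sgs c%:MP = c%:MP.
Proof. by rewrite /sgs /= -(mulr1 c%:MP) mul_mpolyC msymZ msym1. Qed.
Lemma sgsX0 : sgs 'X_(@ord0 1) = 'X_(@ord_max 1).
Proof.
rewrite /sgs /= msymX /swp tpermV; congr (mpolyX _ _).
apply/mnmP => j; rewrite !mnmE.
case: tpermP => [->|->|/eqP a /eqP b] //.
by move: j a b; case=> [[|[|]]] //= ? ? ?; congr (_ == _); apply: val_inj.
Qed.
Lemma sgsX1 : sgs 'X_(@ord_max 1) = 'X_(@ord0 1).
Proof. by rewrite -sgsX0 sgsK. Qed.


Local Notation phs := (liftf sgs).

Lemma phs_inv f : phs (phs f) = f.
Proof. exact: (liftf_inv sgs_inj sgsK). Qed.
Lemma phs_add f g : phs (f + g) = phs f + phs g.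
Proof. exact: (liftf_add sgs_inj). Qed.
Lemma phs_mul f g : phs (f * g) = phs f * phs g.
Proof. exact: (liftf_mul sgs_inj). Qed.
Lemma phs_opp f : phs (- f) = - phs f.
Proof. exact: (liftf_opp sgs_inj). Qed.
Lemma phs_const c : phs (rconst c) = rconst c.
Proof. by rewrite /rconst (liftf_poly sgs_inj) sgsC. Qed.
Lemma phs_x1 : phs (rx1 k) = rx2 k.
Proof. by rewrite /rx1 (liftf_poly sgs_inj) sgsX0. Qed.
Lemma phs_x2 : phs (rx2 k) = rx1 k.
Proof. by rewrite /rx2 (liftf_poly sgs_inj) sgsX1. Qed.

Lemma if_dir (h2 : (2%:R : k) != 0) (l m : k) (Bl Bm : K -> K -> K) :
  is_qbracket l Bl -> is_qbracket m Bm -> l = m \/ l = - m ->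
  exists phi : K -> K, poisson_iso Bl Bm phi.
Proof.
move=> [/poisson_bider hl el] [/poisson_bider hm em] [e|e].
  exists id; split => //; first by exists id.
  by apply: bider_unique => //; rewrite el em e.
pose B' f g := phs (Bm (phs f) (phs g)).
have hB' : is_bider B'.
  have [ml ma mL] := hm; split.
  - by move=> c f g h; rewrite /B' phs_add phs_mul phs_const ml phs_add phs_mul phs_const.
  - by move=> f g; rewrite /B' ma phs_opp.
  - move=> f g h; rewrite /B' (phs_mul g h) mL phs_add (phs_mul (Bm _ _)).
    by rewrite (phs_mul (phs g)) !phs_inv.
have eB : forall f g, Bl f g = B' f g.
  apply: bider_unique => //.
  apply: (etrans el); rewrite /B' phs_x1 phs_x2.
  have [_ ma _] := hm.
  rewrite ma em phs_opp !phs_mul phs_const phs_x1 phs_x2 e rconstN.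
  by rewrite !mulNr -!mulrA [rx1 k * _]mulrC.
exists phs; split.
- by exists phs; move=> f; apply: phs_inv.
- exact: phs_add.
- exact: phs_mul.
- exact: phs_const.
- by move=> f g; rewrite eB /B' phs_inv.
Qed.

Lemma mpolyX_neq0 (m : 'X_{1..2}) : 'X_[m] != 0 :> A.
Proof.
apply/eqP => h; have := congr1 (mcoeff m) h.
by rewrite mcoeffX eqxx mcoeff0 => /eqP; rewrite oner_eq0.
Qed.

Lemma rx1_neq0 : rx1 k != 0.
Proof. by rewrite /rx1 tofrac_eq0 mpolyX_neq0. Qed.
Lemma rx2_neq0 : rx2 k != 0.
Proof. by rewrite /rx2 tofrac_eq0 mpolyX_neq0. Qed.

Lemma tofracZ (c : k) (p : A) : (c *: p)%:F = rconst c * p%:F.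
Proof. by rewrite -mul_mpolyC tofracM. Qed.

Lemma derX D a x n : is_der D -> D x = rconst a * x ->
  D (x ^+ n) = rconst (n%:R * a) * x ^+ n.
Proof.
case=> hD hM hC hx; elim: n => [|n ih].
  by rewrite expr0 -rconst1 hC mul0r rconst0 mul0r.
rewrite exprS hM hx ih !rconstM !rconst_nat -natr1; ring.
Qed.

Definition wt (a1 a2 : k) (m : 'X_{1..2}) : k :=
  (m ord0)%:R * a1 + (m ord_max)%:R * a2.

Lemma der_poly D a1 a2 : is_der D ->
  D (rx1 k) = rconst a1 * rx1 k -> D (rx2 k) = rconst a2 * rx2 k ->
  forall p : A, exists r : A, (D p%:F = r%:F) /\ forall m, r@_m = wt a1 a2 m * p@_m.
Proof.
move=> hd h1 h2; have [hD hM hC] := hd.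
have hXm m : D ('X_[m] : A)%:F = rconst (wt a1 a2 m) * ('X_[m] : A)%:F.
  rewrite (mpolyXE_id _ m) big_ord_recl big_ord1 tofracM.
  have -> : lift ord0 ord0 = ord_max :> 'I_2 by apply: val_inj.
  rewrite hM !tofracXn (derX _ hd h1) (derX _ hd h2) /wt rconstD.
  ring.
elim/mpolyind => [|c m p _ _ [r [ihD ihc]]].
  by exists 0; split; [rewrite tofrac0 (der0 hd) | move=> m; rewrite !mcoeff0 mulr0].
exists ((wt a1 a2 m * c) *: 'X_[m] + r); split.
  by rewrite !tofracD hD ihD !tofracZ hM hC mul0r add0r hXm rconstM mulrCA mulrA.
move=> m'; rewrite !mcoeffD !mcoeffZ !mcoeffX ihc mulrDr.
case: eqP => [<-|_]; first by rewrite !mulr1 mulrC.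
by rewrite !mulr0.
Qed.

Lemma der_lin D : is_der D -> forall c f g, D (rconst c * f + g) = rconst c * D f + D g.
Proof. by case=> hD hM hC c f g; rewrite hD hM hC mul0r add0r. Qed.

Section KeyA.
Variable B : K -> K -> K.
Hypothesis hB : is_bider B.
Variable l : k.
Hypothesis hl0 : l != 0.
Hypothesis h2 : (2%:R : k) != 0.
Hypothesis el : B (rx1 k) (rx2 k) = rconst l * rx1 k * rx2 k.

Definition D1 f := (rconst (- l) * rx2 k)^-1 * B (rx2 k) f.
Definition D2 f := (rconst l * rx1 k)^-1 * B (rx1 k) f.

Lemma D1_der : is_der D1.
Proof. exact: der_scale (der_r hB _). Qed.
Lemma D2_der : is_der D2.
Proof. exact: der_scale (der_r hB _). Qed.

Lemma rl0 : rconst l != 0. Proof. by rewrite rconst_eq0. Qed.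

Lemma D1x1 : D1 (rx1 k) = rconst 1 * rx1 k.
Proof.

have [_ ha _] := hB.
have nz : rconst (- l) * rx2 k != 0.
  by rewrite mulf_neq0 ?rconst_eq0 ?oppr_eq0 ?rx2_neq0.
rewrite /D1 ha el; apply: (mulfI nz); rewrite mulVKf //.
by rewrite rconstN rconst1 mul1r !mulNr -!mulrA [rx1 k * _]mulrC.
Qed.
Lemma D1x2 : D1 (rx2 k) = rconst 0 * rx2 k.
Proof. by rewrite /D1 (b_alt hB h2) rconst0 !mul0r mulr0. Qed.
Lemma D2x1 : D2 (rx1 k) = rconst 0 * rx1 k.
Proof. by rewrite /D2 (b_alt hB h2) rconst0 !mul0r mulr0. Qed.
Lemma D2x2 : D2 (rx2 k) = rconst 1 * rx2 k.
Proof.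
have nz : rconst l * rx1 k != 0 := mulf_neq0 rl0 rx1_neq0.
by rewrite /D2 el; apply: (mulfI nz); rewrite mulVKf // rconst1 mul1r.
Qed.

Lemma B_formula f g : B f g = rconst l * (D1 f * D2 g - D2 f * D1 g).
Proof.
pose B' f g := rconst l * (D1 f * D2 g - D2 f * D1 g).
have hB' : is_bider B'.
  have l1 := der_lin D1_der; have l2 := der_lin D2_der.
  have [_ m1 _] := D1_der; have [_ m2 _] := D2_der.
  split.
  - move=> c f1 g1 h1; rewrite /B' l1 l2; ring.
  - move=> f1 g1; rewrite /B'; ring.
  - move=> f1 g1 h1; rewrite /B' m1 m2; ring.
apply: (bider_unique h2 hB hB') => //.
apply: (etrans el); rewrite /B' D1x1 D1x2 D2x1 D2x2 rconst0 rconst1; ring.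
Qed.
End KeyA.

Definition low (w : A) (M : 'X_{1..2}) := forall m, (M <= m)%O -> w@_m = 0.

Lemma low_add w v M : low w M -> low v M -> low (w + v) M.
Proof. by move=> a b m h; rewrite mcoeffD a // b // addr0. Qed.
Lemma low_sub w v M : low w M -> low v M -> low (w - v) M.
Proof. by move=> a b m h; rewrite mcoeffB a // b // subr0. Qed.

Lemma low_lt w M : w != 0 -> low w M -> (mlead w < M)%O.
Proof.
move=> w0 h; rewrite ltNge; apply/negP => /h /eqP.
by rewrite mleadc_eq0 (negbTE w0).
Qed.

Lemma low_le w M : low w M -> (mlead w <= M)%O.
Proof.
have [->|w0] := eqVneq w 0; first by rewrite mlead0 le0m.
by move=> h; apply: ltW; apply: low_lt.
Qed.

Lemma low_mulr w v M N : low w M -> (mlead v <= N)%O -> low (w * v) (M + N)%MM.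
Proof.
have [->|w0] := eqVneq w 0; first by move=> _ _ m _; rewrite mul0r mcoeff0.
move=> h hv m hm; apply: mcoeff_gt_mlead.
apply: (le_lt_trans (mleadM_le w v)); apply: (lt_le_trans _ hm).
exact: ltmc_le_add (low_lt w0 h) hv.
Qed.

Lemma low_mull w v M N : (mlead v <= N)%O -> low w M -> low (v * w) (N + M)%MM.
Proof. by move=> hv h; rewrite mulrC addmC; apply: low_mulr. Qed.

Lemma coef_prod (P1 P2 r s : A) (a b : k) :
  low r (mlead P1) -> low s (mlead P2) ->
  ((a *: P1 + r) * (b *: P2 + s))@_(mlead P1 + mlead P2)%MM =
    a * b * (P1 * P2)@_(mlead P1 + mlead P2)%MM.
Proof.
move=> hr hs.
rewrite mulrDl mulrDr !mcoeffD.
rewrite (low_mull (mleadZ_le a P1) hs) ?lexx // addr0.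
have hY : (mlead (b *: P2 + s) <= mlead P2)%O.
  apply: (le_trans (mleadD_le _ _)); rewrite leUx mleadZ_le /=.
  exact: low_le.
rewrite (low_mulr hr hY) ?lexx // addr0.
by rewrite -scalerAl -scalerAr scalerA mcoeffZ.
Qed.

Lemma lead_decomp (p r : A) (w : 'X_{1..2} -> k) :
  (forall m, r@_m = w m * p@_m) -> low (r - w (mlead p) *: p) (mlead p).
Proof.
move=> hr m hm; rewrite mcoeffB mcoeffZ hr.
move: hm; rewrite le_eqVlt => /orP [/eqP ->|/mcoeff_gt_mlead ->].
  by rewrite subrr.
by rewrite !mulr0 subrr.
Qed.

Lemma quot_decomp (p q rp rq : A) (w : 'X_{1..2} -> k) : p != 0 -> q != 0 ->
  (forall m, rp@_m = w m * p@_m) -> (forall m, rq@_m = w m * q@_m) ->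
  low (rp * q - p * rq - (w (mlead p) - w (mlead q)) *: (p * q)) (mlead (p * q)).
Proof.
move=> p0 q0 hp hq; rewrite mleadM //.
have -> : rp * q - p * rq - (w (mlead p) - w (mlead q)) *: (p * q) =
  (rp - w (mlead p) *: p) * q - p * (rq - w (mlead q) *: q).
  rewrite -!mul_mpolyC mpolyCB; ring.
apply: low_sub; first by apply: low_mulr (lead_decomp hp) (lexx _).
by apply: low_mull (lexx _) (lead_decomp hq).
Qed.

Lemma der_div D (hd : is_der D) (p q : K) : q != 0 ->
  D (p / q) = (D p * q - p * D q) / (q ^+ 2).
Proof.

move=> q0; have [_ hM _] := hd.
have e : D p = D (p / q) * q + p / q * D q by rewrite -hM divfK.
have q20 : q ^+ 2 != 0 by rewrite expf_neq0.
apply: (mulIf q20).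
rewrite (divfK q20).
rewrite e mulrDl.
rewrite (mulrAC (p / q) (D q) q) (divfK q0).
by rewrite addrK expr2 mulrA.
Qed.

Lemma coef_prod2 (u v P1 P2 : A) (a b : k) :
  low (u - a *: P1) (mlead P1) -> low (v - b *: P2) (mlead P2) ->
  (u * v)@_(mlead P1 + mlead P2)%MM = a * b * (P1 * P2)@_(mlead P1 + mlead P2)%MM.
Proof.
move=> hu hv; rewrite -(coef_prod a b hu hv).
by rewrite [_ + (u - _)]addrC subrK [_ + (v - _)]addrC subrK.
Qed.

Lemma aux1 (F : fieldType) (L C U1 U2 V1 V2 x y z w : F) : y != 0 -> w != 0 ->
  L * (U1 / y^+2 * (V2 / w^+2) - U2 / y^+2 * (V1 / w^+2)) = C * (x / y) * (z / w) ->
  L * (U1 * V2 - U2 * V1) = C * (x * y * (z * w)).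
Proof.
move=> y0 w0 E.
transitivity (L * (U1 / y^+2 * (V2 / w^+2) - U2 / y^+2 * (V1 / w^+2)) * (y^+2 * w^+2)).
  by field; rewrite y0 w0.
by rewrite E; field; rewrite y0 w0.
Qed.

Lemma frac_nz (p q : A) : q != 0 -> p%:F / q%:F != 0 :> K -> p != 0.
Proof. by move=> _; apply: contra => /eqP ->; rewrite tofrac0 mul0r. Qed.

Lemma key B (hB : is_bider B) (h2 : (2%:R : k) != 0) (l : k) (hl0 : l != 0)
  (el : B (rx1 k) (rx2 k) = rconst l * rx1 k * rx2 k) (f g : K) (c : k) :
  f != 0 -> g != 0 -> B f g = rconst c * f * g ->
  exists n : int, c = l * n%:~R.
Proof.
have [p1 [q1 [q10 ->]]] := @frac_repr _ f.
have [p2 [q2 [q20 ->]]] := @frac_repr _ g.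
move=> /(frac_nz q10) p10 /(frac_nz q20) p20.
have hd1 := D1_der hB l; have hd2 := D2_der hB l.
have e11 := D1x1 hB hl0 el; have e12 := D1x2 hB l h2.
have e21 := D2x1 hB l h2; have e22 := D2x2 hl0 el.
have P1 := der_poly hd1 e11 e12; have P2 := der_poly hd2 e21 e22.
have [a1 [ea1 ca1]] := P1 p1; have [b1 [eb1 cb1]] := P1 q1.
have [a2 [ea2 ca2]] := P1 p2; have [b2 [eb2 cb2]] := P1 q2.
have [c1 [ec1 cc1]] := P2 p1; have [d1 [ed1 cd1]] := P2 q1.
have [c2 [ec2 cc2]] := P2 p2; have [d2 [ed2 cd2]] := P2 q2.
have q10F : q1%:F != 0 :> K by rewrite tofrac_eq0.
have q20F : q2%:F != 0 :> K by rewrite tofrac_eq0.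
set u1 := a1 * q1 - p1 * b1.
set v1 := a2 * q2 - p2 * b2.
set u2 := c1 * q1 - p1 * d1.
set v2 := c2 * q2 - p2 * d2.
have Du1 : D1 B l (p1%:F / q1%:F) = u1%:F / (q1 ^+ 2)%:F.
  by rewrite (der_div hd1 _ q10F) ea1 eb1 /u1 tofracXn tofracB !tofracM.
have Du2 : D2 B l (p1%:F / q1%:F) = u2%:F / (q1 ^+ 2)%:F.
  by rewrite (der_div hd2 _ q10F) ec1 ed1 /u2 tofracXn tofracB !tofracM.
have Dv1 : D1 B l (p2%:F / q2%:F) = v1%:F / (q2 ^+ 2)%:F.
  by rewrite (der_div hd1 _ q20F) ea2 eb2 /v1 tofracXn tofracB !tofracM.
have Dv2 : D2 B l (p2%:F / q2%:F) = v2%:F / (q2 ^+ 2)%:F.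
  by rewrite (der_div hd2 _ q20F) ec2 ed2 /v2 tofracXn tofracB !tofracM.
rewrite (B_formula hB hl0 h2 el) Du1 Du2 Dv1 Dv2 => E.
have PE : l *: (u1 * v2 - u2 * v1) = c *: (p1 * q1 * (p2 * q2)).
  apply/eqP; rewrite -tofrac_eq; apply/eqP.
  rewrite !tofracZ tofracB !tofracM.
  by move: E; rewrite !tofracXn => E; exact: aux1 q10F q20F E.
have lu1 := quot_decomp p10 q10 ca1 cb1.
have lu2 := quot_decomp p10 q10 cc1 cd1.
have lv1 := quot_decomp p20 q20 ca2 cb2.
have lv2 := quot_decomp p20 q20 cc2 cd2.
have := congr1 (mcoeff (mlead (p1 * q1) + mlead (p2 * q2))%MM) PE.
rewrite !mcoeffZ mcoeffB (coef_prod2 lu1 lv2) (coef_prod2 lu2 lv1).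
rewrite mleadcM.
set X := mleadc _ * mleadc _.
have X0 : X != 0.
  by rewrite /X mulf_neq0 // mleadc_eq0 mulf_neq0.
move=> h.
exists (((mlead p1 ord0)%:Z - (mlead q1 ord0)%:Z) * ((mlead p2 ord_max)%:Z - (mlead q2 ord_max)%:Z)
  - ((mlead p1 ord_max)%:Z - (mlead q1 ord_max)%:Z) * ((mlead p2 ord0)%:Z - (mlead q2 ord0)%:Z)).
apply: (mulIf X0); rewrite -h /wt.
rewrite !(rmorphB, rmorphM) /= -!pmulrn.
ring.
Qed.
End Main.

Lemma int_unit (a b : int) : a * b = 1 -> b = 1 \/ b = -1.
Proof.
by move=> /intUnitRing.unitzPl /orP [/eqP|/eqP]; [left|right].
Qed.
Lemma intr_char0 (F : fieldType) (hc : [pchar F] =i pred0) (z : int) : z%:~R = 0 :> F -> z = 0.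
Proof.
have hp := (pcharf0P F).1 hc.
case: z => n.
  by change (n%:R = 0 :> F -> n%:Z = 0) => /eqP; rewrite hp => /eqP ->.
rewrite NegzE rmorphN; change (- (n.+1)%:R = 0 :> F -> Negz n = 0).
by move=> /eqP; rewrite oppr_eq0 hp.
Qed.

Lemma zero_bider (k : fieldType) : is_bider (fun _ _ : ratfun2 k => 0).
Proof. by split => *; rewrite ?mulr0 ?mul0r ?addr0 ?oppr0. Qed.

Lemma iso_inv (k : fieldType) (Bl Bm : ratfun2 k -> ratfun2 k -> ratfun2 k) phi (l m : k) :
  poisson_iso Bl Bm phi -> Bm (rx1 k) (rx2 k) = rconst m * rx1 k * rx2 k ->
  exists f g, [/\ f != 0, g != 0 & Bl f g = rconst m * f * g].
Proof.
case=> [[psi h1 h2] hD hM hC hB].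
have phi0 : phi 0 = 0 by apply: (addrI (phi 0)); rewrite -hD !addr0.
exists (psi (rx1 k)), (psi (rx2 k)); split.
- by apply/eqP => e; have := @rx1_neq0 k; rewrite -[rx1 k]h2 e phi0 eqxx.
- by apply/eqP => e; have := @rx2_neq0 k; rewrite -[rx2 k]h2 e phi0 eqxx.
- apply: (can_inj h1); rewrite hB !hM hC !h2.
  exact.
Qed.

Lemma iso_fwd (k : fieldType) (Bl Bm : ratfun2 k -> ratfun2 k -> ratfun2 k) phi (l : k) :
  poisson_iso Bl Bm phi -> Bl (rx1 k) (rx2 k) = rconst l * rx1 k * rx2 k ->
  exists f g, [/\ f != 0, g != 0 & Bm f g = rconst l * f * g].
Proof.
case=> [[psi h1 h2] hD hM hC hB] e.
have phi0 : phi 0 = 0 by apply: (addrI (phi 0)); rewrite -hD !addr0.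
exists (phi (rx1 k)), (phi (rx2 k)); split.
- by apply/eqP => e'; have := @rx1_neq0 k; rewrite -[rx1 k]h1 e' -[X in psi X]phi0 h1 eqxx.
- by apply/eqP => e'; have := @rx2_neq0 k; rewrite -[rx2 k]h1 e' -[X in psi X]phi0 h1 eqxx.
- by rewrite -hB e !hM hC.
Qed.

Lemma zero_case (k : fieldType) (h2 : (2%:R : k) != 0) B (hB : is_bider B) (m : k) :
  B (rx1 k) (rx2 k) = rconst 0 * rx1 k * rx2 k ->
  (exists f g, [/\ f != 0, g != 0 & B f g = rconst m * f * g]) -> m = 0.
Proof.
move=> e [f [g [f0 g0 efg]]].
have z := bider_unique h2 hB (zero_bider k).
rewrite z in efg; last by rewrite e rconst0 !mul0r.
apply/eqP; rewrite -rconst_eq0; apply/eqP.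
by move/esym/eqP: efg; rewrite !mulf_eq0 (negbTE f0) (negbTE g0) !orbF => /eqP.
Qed.

Theorem corollary5p4 (k : fieldType) (hchar : [pchar k] =i pred0) (l m : k)
    (Bl Bm : ratfun2 k -> ratfun2 k -> ratfun2 k)
    (hBl : is_qbracket l Bl) (hBm : is_qbracket m Bm) :
  (exists phi : ratfun2 k -> ratfun2 k, poisson_iso Bl Bm phi) <-> (l = m \/ l = - m).
Proof.
have h2 : (2%:R : k) != 0 by rewrite ((pcharf0P k).1 hchar 2).
split; last exact: if_dir.
move=> [phi iso].
have [/poisson_bider hl el] := hBl; have [/poisson_bider hm em] := hBm.
have Sm := iso_inv l iso em.
have Sl := iso_fwd iso el.
have [l0|l0] := eqVneq l 0.
  left; rewrite l0; apply/esym; apply: (zero_case h2 hl _ Sm).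
  by rewrite el l0.
have [m0|m0] := eqVneq m 0.
  left; rewrite m0; apply: (zero_case h2 hm _ Sl).
  by rewrite em m0.
have [f [g [f0 g0 e1]]] := Sl.
have [n en] := key hm h2 m0 em f0 g0 e1.
have [f' [g' [f0' g0' e2]]] := Sm.
have [n' en'] := key hl h2 l0 el f0' g0' e2.
have : (n' * n - 1)%:~R = 0 :> k.
  rewrite rmorphB rmorphM rmorph1 /=.
  apply: (mulfI l0); rewrite mulr0 mulrBr mulr1 mulrA -en' -en.
  exact: subrr.
move/(intr_char0 hchar)/eqP; rewrite subr_eq0 => /eqP /int_unit [] n1.
  by left; rewrite en n1 mulr1.
by right; rewrite en n1 rmorphN rmorph1 mulrN1.
Qed.
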